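(* Let $\mathcal{C}_1$ and $\mathcal{C}_2$ be nice GFG-tNCWs with $L(\mathcal{C}_1)=L(\mathcal{C}_2)$, each minimal (no GFG-tNCW for the same language has fewer states) and each $\alpha$-maximal up to homogeneity. Then $\mathcal{C}_1$ and $\mathcal{C}_2$ are isomorphic.
   Context: A tNCW is $\mathcal{A}=\langle\Sigma,Q,q_0,\delta,\alpha\rangle$: finite alphabet $\Sigma$, finite state set $Q$, initial state $q_0$, transition function $\delta:Q\times\Sigma\to 2^Q\setminus\{\emptyset\}$ with transition relation $\Delta=\{\langle q,\sigma,s\rangle:s\in\delta(q,\sigma)\}$, and $\alpha\subseteq\Delta$; $|\mathcal{A}|=|Q|$. $\alpha$-transitions are those in $\alpha$, $\bar\alpha$-transitions those in $\Delta\setminus\alpha$; $\delta^{\alpha}(q,\sigma)$, $\delta^{\bar\alpha}(q,\sigma)$ denote the $\sigma$-successors via $\alpha$-, resp. $\bar\alpha$-transitions. A run on $w=\sigma_1\sigma_2\cdots$ is $r_0r_1\cdots$ with $r_0=q_0$, $r_{i+1}\in\delta(r_i,\sigma_{i+1})$; accepting iff it traverses $\alpha$-transitions only finitely often; $L(\mathcal{A})$ is the accepted language. $\mathcal{A}^q$ is $\mathcal{A}$ with initial state $q$; $q\sim s$ iff $L(\mathcal{A}^q)=L(\mathcal{A}^s)$. $\mathcal{A}$ is GFG if there is $f:\Sigma^*\to Q$ with $f(\epsilon)=q_0$, $\langle f(u),\sigma,f(u\sigma)\rangle\in\Delta$ for all $u,\sigma$, and for every $w\in L(\mathcal{A})$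 the run $f(w[1,0]),f(w[1,1]),\dots$ is accepting; $q$ is GFG if $\mathcal{A}^q$ is. $\mathcal{A}$ is semantically deterministic if all $\sigma$-successors of any state are pairwise $\sim$-equivalent; safe deterministic if $|\delta^{\bar\alpha}(q,\sigma)|\le1$ always; normal if whenever a path of $\bar\alpha$-transitions leads from $q$ to $s$, one also leads from $s$ to $q$. Nice: all states reachable and GFG, and normal, safe deterministic, semantically deterministic. $\mathcal{A}$ is $\alpha$-homogenous if for all $q,\sigma$, $\delta^{\alpha}(q,\sigma)=\emptyset$ or $\delta^{\bar\alpha}(q,\sigma)=\emptyset$. A triple $\langle q,\sigma,s\rangle\in Q\times\Sigma\times Q$ is an allowed transition of $\mathcal{A}$ if there is $s'$ with $s\sim s'$ and $\langle q,\sigma,s'\rangle\in\Delta$. $\mathcal{A}$ is $\alpha$-maximal up to homogeneity if it is $\alpha$-homogenous and, for every $q\in Q$ and $\sigma\in\Sigma$ with $\delta^{\bar\alpha}(q,\sigma)=\emptyset$, every allowed transition in $\{q\}\times\{\sigma\}\times Q$ is in $\Delta$. For tNCWs $\mathcal{A},\mathcal{B}$, a bijection $\kappa:Q_\mathcal{A}\to Q_\mathcal{B}$ is $\bar\alpha$-transition respecting if for all $q,q',\sigma$: $q'\in\delta^{\bar\alpha}_\mathcal{A}(q,\sigma)$ iff $\kappa(q')\in\delta^{\bar\alpha}_\mathcal{B}(\kappa(q),\sigma)$, and $\alpha$-transition respecting if the same holds with $\delta^{\alpha}$. $\mathcal{A},\mathcal{B}$ are isomorphic if some bijection is both $\alpha$-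 and $\bar\alpha$-transition respecting. *)

(* Defs.v *)
From mathcomp Require Import all_boot.
Unset Printing Implicit Defensive.

Record tNCW (Sigma : finType) := TNCW {
  st : finType;
  q0 : st;
  delta : st -> Sigma -> {set st};
  alpha : st -> Sigma -> st -> bool;
  delta_ne : forall q a, delta q a != set0;
  alpha_sub : forall q a s, alpha q a s -> s \in delta q a
}.

Arguments q0 {Sigma}.
Arguments delta {Sigma t} : rename.
Arguments alpha {Sigma t} : rename.
Arguments st {Sigma}.

Section Defs.
Variable Sigma : finType.
Implicit Types A B : tNCW Sigma.

Definition word := nat -> Sigma.

Definition delta_a A (q : st A) (a : Sigma) : {set st A} :=
  [set s in delta q a | alpha q a s].
Definition delta_na A (q : st A) (a : Sigma) : {set st A} :=
  [set s in delta q a | ~~ alpha q a s].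

Definition with_init A (q : st A) : tNCW Sigma :=
  @TNCW Sigma (st A) q (@delta _ A) (@alpha _ A) (@delta_ne _ A) (@alpha_sub _ A).

(* runs: w = w 0, w 1, ... (w i is the letter sigma_{i+1}) *)
Definition is_run A (w : word) (r : nat -> st A) : Prop :=
  r 0 = q0 A /\ forall i, r i.+1 \in delta (r i) (w i).

Definition acc_seq A (w : word) (r : nat -> st A) : Prop :=
  exists N, forall i, N <= i -> ~~ alpha (r i) (w i) (r i.+1).

Definition lang A (w : word) : Prop :=
  exists r, is_run A w r /\ acc_seq A w r.

Definition st_equiv A (q s : st A) : Prop :=
  forall w, lang (with_init A q) w <-> lang (with_init A s) w.

(* w[1,i] is mkseq w i *)
Definition GFG A : Prop :=
  exists f : seq Sigma -> st A,
    [/\ f [::] = q0 A,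
        (forall u a, f (rcons u a) \in delta (f u) a) &
        (forall w, lang A w -> acc_seq A w (fun i => f (mkseq w i)))].

Definition GFG_state A (q : st A) : Prop := GFG (with_init A q).

Inductive reachable A : st A -> Prop :=
| reach0 : reachable A (q0 A)
| reachS q a s : reachable A q -> s \in delta q a -> reachable A s.

Definition sem_det A : Prop :=
  forall q a s s', s \in delta q a -> s' \in delta q a -> st_equiv A s s'.

Definition safe_det A : Prop :=
  forall q a, #|delta_na A q a| <= 1.

Definition na_edge A : rel (st A) :=
  fun q s => [exists a, s \in delta_na A q a].

Definition normal A : Prop :=
  forall q s, connect (na_edge A) q s -> connect (na_edge A) s q.

Definition nice A : Prop :=
  [/\ (forall q, reachable A q), (forall q, GFG_state A q),
      normal A, safe_det A & sem_det A].

Definition minimal_GFG A : Prop :=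
  forall B : tNCW Sigma, GFG B -> (forall w, lang B w <-> lang A w) ->
    #|st A| <= #|st B|.

Definition alpha_homogenous A : Prop :=
  forall q a, delta_a A q a = set0 \/ delta_na A q a = set0.

Definition allowed A (q : st A) (a : Sigma) (s : st A) : Prop :=
  exists s', st_equiv A s s' /\ s' \in delta q a.

Definition alpha_max_up_to_hom A : Prop :=
  alpha_homogenous A /\
  forall q a, delta_na A q a = set0 -> forall s, allowed A q a s -> s \in delta q a.

Definition isomorphic A B : Prop :=
  exists kappa : st A -> st B,
    [/\ bijective kappa,
        (forall q q' a, q' \in delta_na A q a <-> kappa q' \in delta_na B (kappa q) a) &
        (forall q q' a, q' \in delta_a A q a <-> kappa q' \in delta_a B (kappa q) a)].

End Defs.

Arguments delta_a {Sigma}. Arguments delta_na {Sigma}. Arguments with_init {Sigma}.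
Arguments is_run {Sigma}. Arguments acc_seq {Sigma}. Arguments lang {Sigma}.
Arguments st_equiv {Sigma}. Arguments GFG {Sigma}. Arguments GFG_state {Sigma}.
Arguments reachable {Sigma}. Arguments sem_det {Sigma}. Arguments safe_det {Sigma}.
Arguments na_edge {Sigma}. Arguments normal {Sigma}. Arguments nice {Sigma}.
Arguments minimal_GFG {Sigma}. Arguments alpha_homogenous {Sigma}.
Arguments allowed {Sigma}. Arguments alpha_max_up_to_hom {Sigma}.
Arguments isomorphic {Sigma}.

(* Main.v *)
From Stdlib Require Import ClassicalEpsilon Classical.
Require Import Defs.
From mathcomp Require Import all_boot zify.
Unset Printing Implicit Defensive.
Set Implicit Arguments.

Definition pb (P : Prop) : bool := if excluded_middle_informative P then true else false.
Lemma pbP (P : Prop) : reflect P (pb P).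
Proof. rewrite /pb; case: excluded_middle_informative => h; constructor; done. Qed.

Section Basics.
Context {Sigma : finType}.
Implicit Types A B C : tNCW Sigma.

Definition scons (a : Sigma) (w : word Sigma) : word Sigma :=
  fun n => if n is n'.+1 then w n' else a.
Definition wcat (x : seq Sigma) (w : word Sigma) : word Sigma := foldr scons w x.
Definition langq (A : tNCW Sigma) (q : st A) (w : word Sigma) := lang (with_init A q) w.

Lemma lang_ext A w w' : (forall i, w i = w' i) -> lang A w -> lang A w'.
Proof.
move=> e [r [[r0 rs] [N hN]]]; exists r; split; first split => //.
  by move=> i; rewrite -e.
by exists N => i hi; rewrite -e; apply: hN.
Qed.

Lemma langq_ext A q w w' : (forall i, w i = w' i) -> langq A q w -> langq A q w'.
Proof. exact: lang_ext. Qed.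

Lemma langq0 A w : lang A w <-> langq A (q0 A) w.
Proof. by []. Qed.

Lemma langq_cons A (q s : st A) a w : s \in delta q a -> langq A s w -> langq A q (scons a w).
Proof.
move=> hs [r [[r0 rs] [N hN]]].
exists (fun n => if n is n'.+1 then r n' else q); split; first split => //.
  by case=> [|i] /=; [rewrite r0 | apply: rs].
by exists N.+1 => -[|i] //= hi; apply: hN.
Qed.

Lemma langq_uncons A (q : st A) a w : langq A q (scons a w) ->
  exists2 s, s \in delta q a & langq A s w.
Proof.
move=> [r [[r0 rs] [N hN]]]; exists (r 1).
  by have := rs 0; rewrite r0.
exists (fun n => r n.+1); split; first split => //.
by exists N => i hi; apply: hN; apply: leq_trans hi _.
Qed.

Lemma resid A (sd : sem_det A) (q s : st A) a w : s \in delta q a ->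
  (langq A s w <-> langq A q (scons a w)).
Proof.
move=> hs; split; first exact: langq_cons.
case/langq_uncons => s' hs' hl.
by have := sd q a s' s hs' hs w; case => h _; apply: h.
Qed.

Fixpoint frun A (q : st A) (x : seq Sigma) (q' : st A) : Prop :=
  match x with [::] => q = q' | a :: x' => exists2 s, s \in delta q a & frun A s x' q' end.
Arguments frun {A}.

Lemma frun_lang A q x q' w : frun q x q' -> langq A q' w -> langq A q (wcat x w).
Proof.
elim: x q => [|a x IH] q /=; first by move=> ->.
by case=> s hs hf hl; apply: langq_cons hs _; apply: IH.
Qed.

Lemma frun_resid A (sd : sem_det A) q x q' w : frun q x q' -> langq A q (wcat x w) -> langq A q' w.
Proof.
elim: x q => [|a x IH] q /=; first by move=> ->.
case=> s hs hf hl; apply: IH hf _.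
exact: (proj2 (resid sd _ _ _ hs) hl).
Qed.

Lemma frun_cat A (q q1 q2 : st A) x y : frun q x q1 -> frun q1 y q2 -> frun q (x ++ y) q2.
Proof.
elim: x q => [|a x IH] q /=; first by move=> ->.
by case=> s hs hf h2; exists s => //; apply: IH.
Qed.

Lemma frun_rcons A (q q' s : st A) x a : frun q x q' -> s \in delta q' a -> frun q (rcons x a) s.
Proof. by move=> h hs; rewrite -cats1; apply: frun_cat h _; exists s. Qed.

Lemma strat_frun A (f : seq Sigma -> st A) :
  (forall u a, f (rcons u a) \in delta (f u) a) -> forall v, frun (f [::]) v (f v).
Proof.
move=> hf; elim/last_ind => [|v a IH] //=.
by apply: frun_rcons IH _.
Qed.

Lemma reach_frun A q : reachable A q -> exists x, frun (q0 A) x q.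
Proof.
elim=> [|q1 a s _ [x hx] hs]; first by exists [::].
by exists (rcons x a); apply: frun_rcons hx hs.
Qed.

Lemma wcat_nth x w (x0 : Sigma) i : wcat x w i = if i < size x then nth x0 x i else w (i - size x).
Proof.
elim: x i => [|a x IH] i /=; first by rewrite subn0.
by case: i => [|i] //=; rewrite /scons IH.
Qed.

Fixpoint sfin A (q : st A) (x : seq Sigma) : Prop :=
  match x with [::] => True | a :: x' => exists2 s, s \in delta_na A q a & sfin A s x' end.
Arguments sfin {A}.
Fixpoint spath A (q : st A) (x : seq Sigma) (q' : st A) : Prop :=
  match x with [::] => q = q' | a :: x' => exists2 s, s \in delta_na A q a & spath A s x' q' end.
Arguments spath {A}.

Lemma na_delta A (q s : st A) a : s \in delta_na A q a -> s \in delta q a.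
Proof. by rewrite inE => /andP[]. Qed.

Lemma na_alpha A (q s : st A) a : s \in delta_na A q a -> ~~ alpha q a s.
Proof. by rewrite inE => /andP[]. Qed.

Lemma sd_uniq A (sd : safe_det A) (q s s' : st A) a :
  s \in delta_na A q a -> s' \in delta_na A q a -> s = s'.
Proof. by move=> h1 h2; have /card_le1_eqP := sd q a; apply. Qed.

Lemma sfin_spath A (q : st A) x : sfin q x -> exists q', spath q x q'.
Proof.
elim: x q => [|a x IH] q /=; first by exists q.
by case=> s hs /IH [q' h]; exists q'; exists s.
Qed.

Lemma spath_frun A (q q' : st A) x : spath q x q' -> frun q x q'.
Proof.
elim: x q => [|a x IH] q //=.
by case=> s hs h; exists s; [apply: na_delta hs | apply: IH].
Qed.

Lemma spath_cat A (q q1 q2 : st A) x y : spath q x q1 -> spath q1 y q2 -> spath q (x ++ y) q2.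
Proof.
elim: x q => [|a x IH] q /=; first by move=> ->.
by case=> s hs hf h2; exists s => //; apply: IH.
Qed.

Lemma sfin_cat A (q : st A) x y : sfin q (x ++ y) -> sfin q x.
Proof.
elim: x q => [|a x IH] q //=.
by case=> s hs h; exists s => //; apply: IH.
Qed.

Lemma spath_connect A (q q' : st A) x : spath q x q' -> connect (na_edge A) q q'.
Proof.
elim: x q => [|a x IH] q /=; first by move=> ->.
case=> s hs h; apply: connect_trans (IH _ h).
by apply: connect1; apply/existsP; exists a.
Qed.

Lemma connect_spath A (q q' : st A) : connect (na_edge A) q q' -> exists x, spath q x q'.
Proof.
case/connectP => p; elim: p q => [|s p IH] q /=; first by move=> _ ->; exists [::].
case/andP => /existsP [a ha] hp hl.
by case: (IH _ hp hl) => x hx; exists (a :: x); exists s.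
Qed.

Definition le A B (p : st A) (q : st B) : Prop :=
  (forall w, langq A p w <-> langq B q w) /\ (forall x, sfin p x -> sfin q x).
Arguments le {A B}.

Lemma le_refl A (p : st A) : le p p.
Proof. by split. Qed.

Lemma le_trans A B C (p : st A) (q : st B) (r : st C) : le p q -> le q r -> le p r.
Proof.
case=> h1 h2 [h3 h4]; split; last by move=> x /h2 /h4.
by move=> w; split => [/h1/h3|/h3/h1].
Qed.

Lemma le_step A B (sdA : sem_det A) (sdB : sem_det B) (sfB : safe_det B)
  (p : st A) (q : st B) a p' : le p q -> p' \in delta_na A p a ->
  exists2 q', q' \in delta_na B q a & le p' q'.
Proof.
case=> hl hs hp'.
have [q' hq' _] : sfin q [:: a] by apply: hs; exists p'.
exists q' => //; split.
  move=> w; rewrite (resid sdA _ _ _ (na_delta hp')) (resid sdB _ _ _ (na_delta hq')).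
  exact: hl.
move=> x hx; have [q'' hq'' h] : sfin q (a :: x) by apply: hs; exists p'.
by rewrite (sd_uniq sfB hq' hq'').
Qed.

End Basics.
Arguments le {Sigma A B}.
Arguments le_refl {Sigma A}.
Arguments frun {Sigma A}.
Arguments sfin {Sigma A}.
Arguments spath {Sigma A}.
Arguments frun_resid {Sigma A} sd {q x q' w}.
Arguments frun_lang {Sigma A q x q' w}.
Arguments frun_cat {Sigma A q q1 q2 x y}.
Arguments spath_frun {Sigma A q q' x}.
Arguments sfin_cat {Sigma A q x y}.
Arguments spath_connect {Sigma A q q' x}.
Arguments strat_frun {Sigma A f}.
Arguments sfin_spath {Sigma A q x}.
Arguments spath_cat {Sigma A q q1 q2 x y}.
Arguments connect_spath {Sigma A q q'}.
Unset Strict Implicit.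

Section Cons.
Context {Sigma : finType}.
Implicit Types A : tNCW Sigma.

Definition seqv A (p q : st A) := le p q /\ le q p.

Notation DT R := ({x | x \in R}) (only parsing).

Definition deltaD A (R : {set st A}) (d : DT R) (a : Sigma) : {set DT R} :=
  [set d' : DT R | pb (forall w, langq A (val d') w <-> langq A (val d) (scons a w))].

Definition alphaD A (R : {set st A}) (d : DT R) (a : Sigma) (d' : DT R) : bool :=
  (d' \in deltaD d a) &&
  ~~ pb (exists2 r', r' \in delta_na A (val d) a & seqv r' (val d')).

Lemma alphaD_sub A (R : {set st A}) d a d' : @alphaD A R d a d' -> d' \in deltaD d a.
Proof. by case/andP. Qed.

Definition mkD A (R : {set st A}) (d0 : DT R) (ne : forall d a, @deltaD A R d a != set0) : tNCW Sigma :=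
  @TNCW Sigma (DT R) d0 (@deltaD A R) (@alphaD A R) ne (@alphaD_sub A R).

Lemma D_safe_lang A (sdA : sem_det A) (sfA : safe_det A) (R : {set st A})
  (r : nat -> DT R) (w : word Sigma) :
  (forall i, r i.+1 \in deltaD (r i) (w i) /\ ~~ alphaD (r i) (w i) (r i.+1)) ->
  langq A (val (r 0)) w.
Proof.
move=> hr.
pose a := fix a i := if i is i'.+1 then odflt (a i') [pick s in delta_na A (a i') (w i')]
                     else val (r 0).
have stepP : forall i, le (val (r i)) (a i) ->
    a i.+1 \in delta_na A (a i) (w i) /\ le (val (r i.+1)) (a i.+1).
  move=> i hi; case: (hr i) => hin hna.
  have [r' hr' hs] : exists2 r', r' \in delta_na A (val (r i)) (w i) & seqv r' (val (r i.+1)).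
    apply/pbP; move: hna; rewrite /alphaD hin /=; by rewrite negbK.
  case: (le_step sdA sdA sfA hi hr') => s hs1 hle.
  have -> : a i.+1 = s.
    rewrite /=; case: pickP => [s' hs'|/(_ s)]; last by rewrite hs1.
    by rewrite (sd_uniq sfA hs' hs1).
  by split => //; apply: le_trans hs.2 hle.
have inv : forall i, le (val (r i)) (a i).
  by elim=> [|i IH]; [apply: le_refl | exact: (stepP i IH).2].
exists a; split; first split => //.
  by move=> i; apply: na_delta (stepP i (inv i)).1.
by exists 0 => i _; apply: na_alpha (stepP i (inv i)).1.
Qed.

Lemma D_sound A (sdA : sem_det A) (sfA : safe_det A) (R : {set st A}) (d0 : DT R) ne :
  le (q0 A) (val d0) -> forall w, lang (@mkD A R d0 ne) w -> lang A w.
Proof.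
move=> h0 w [r [[r0 rs] [N hN]]].
pose sh k := fun j => w (k + j).
have hsuf : langq A (val (r N)) (sh N).
  have := @D_safe_lang A sdA sfA R (fun i => r (N + i)) (sh N).
  rewrite addn0; apply => i; rewrite /sh addnS; split; first exact: rs.
  by apply: hN; apply: leq_addr.
have desc : forall k, k <= N -> langq A (val (r (N - k))) (sh (N - k)).
  elim=> [|k IH] hk; first by rewrite subn0.
  have e : (N - k.+1).+1 = N - k by rewrite subnSK.
  have := IH (ltnW hk); rewrite -e => hl.
  have := rs (N - k.+1); rewrite /= inE => /pbP /(_ (sh (N - k.+1).+1)) [h1 _].
  apply: langq_ext (h1 hl) => -[|j] /=; rewrite /sh ?addn0 //.
  by rewrite addSnnS.
have := desc N (leqnn N); rewrite subnn r0 => hl.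
apply/langq0; apply: langq_ext (proj2 (h0.1 _) hl) => j; by rewrite /sh add0n.
Qed.

Lemma dom_full A (sdA : sem_det A) (sfA : safe_det A) (gA : GFG A) (mA : minimal_GFG A)
  (R : {set st A})
  (hdom : forall a : st A, exists2 r : st A, r \in R & le a r)
  (hcl : forall (r : st A) a (r' : st A), r \in R -> r' \in delta_na A r a -> exists2 r'', r'' \in R & seqv r' r'') :
  forall a : st A, a \in R.
Proof.
have inD : forall (a a' : st A) (d : DT R) s, le a (val d) -> a' \in delta a s ->
    forall r (hr : r \in R), le a' r -> (Sub r hr : DT R) \in deltaD d s.
  move=> a a' d s hle ha' r hr hl; rewrite inE; apply/pbP => w /=.
  rewrite -(proj1 hle) -(resid sdA _ _ _ ha'); split; [exact: (proj2 (hl.1 w)) | exact: (proj1 (hl.1 w))].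
have ne : forall (d : DT R) a, deltaD d a != set0.
  move=> d s; case/set0Pn: (@delta_ne _ A (val d) s) => a' ha'.
  case: (hdom a') => r hr hl; apply/set0Pn; exists (Sub r hr).
  exact: (inD (val d) a' d s (le_refl _) ha' r hr hl).
case: (hdom (q0 A)) => r0 hr0 le0.
pose d0 : DT R := Sub r0 hr0.
have le0' : le (q0 A) (val d0) by [].
pose D := @mkD A R d0 ne.
case: gA => f [f0 fstep facc].
pose good1 (d : DT R) s (a' : st A) := fun d' : DT R =>
  [&& d' \in deltaD d s, pb (le a' (val d')) & ~~ alphaD d s d'].
pose good2 (d : DT R) s (a' : st A) := fun d' : DT R =>
  (d' \in deltaD d s) && pb (le a' (val d')).
pose step (d : DT R) s (a' : st A) : DT R :=
  if [pick d' | good1 d s a' d'] is Some d' then d' else odflt d [pick d' | good2 d s a' d'].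
have stepP : forall (a a' : st A) (d : DT R) s, le a (val d) -> a' \in delta a s ->
   [/\ step d s a' \in deltaD d s, le a' (val (step d s a')) &
       (a' \in delta_na A a s -> ~~ alphaD d s (step d s a'))].
  move=> a a' d s hle ha'.
  rewrite /step; case: pickP => [d' /and3P [h1 /pbP h2 h3] | hn].
    by split.
  have [r hr hl] := hdom a'.
  case: pickP => [d' /andP [h1 /pbP h2] | /(_ (Sub r hr))]; last first.
    by rewrite /good2 (inD a a' d s hle ha' r hr hl) /=; move/pbP.
  split => // hna.
  case: (le_step sdA sdA sfA hle hna) => d'' hd'' hl''.
  case: (hcl (val d) s d'' (valP d) hd'') => r'' hr'' hs''.
  have := hn (Sub r'' hr''); rewrite /good1.
  have hl2 : le a' r'' by apply: le_trans hl'' hs''.1.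
  rewrite (inD a a' d s hle ha' r'' hr'' hl2) /=.
  have -> : pb (le a' r'') by apply/pbP.
  rewrite /= /alphaD (inD a a' d s hle ha' r'' hr'' hl2) /=.
  have -> : pb (exists2 r', r' \in delta_na A (val d) s & seqv r' r'') by apply/pbP; exists d''.
  by [].
pose h := fix h (v : seq Sigma) : DT R := if v is s :: v' then step (h v') s (f (rev v)) else d0.
pose fD u := h (rev u).
have fDS : forall u s, fD (rcons u s) = step (fD u) s (f (rcons u s)).
  by move=> u s; rewrite /fD rev_rcons /= rev_cons revK.
have inv : forall u, le (f u) (val (fD u)).
  elim/last_ind => [|u s IH]; first by rewrite f0.
  by rewrite fDS; case: (stepP _ _ _ s IH (fstep u s)).
have fDstep : forall u s, fD (rcons u s) \in deltaD (fD u) s.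
  by move=> u s; rewrite fDS; case: (stepP _ _ _ s (inv u) (fstep u s)).
have fDacc : forall w, lang A w -> acc_seq D w (fun i => fD (mkseq w i)).
  move=> w /facc [N hN]; exists N => i hi /=; rewrite mkseqS fDS.
  case: (stepP _ _ _ (w i) (inv (mkseq w i)) (fstep (mkseq w i) (w i))) => _ _; apply.
  by rewrite inE fstep /=; have := hN i hi; rewrite mkseqS.
have hlang : forall w, lang D w <-> lang A w.
  move=> w; split; first exact: (D_sound sdA sfA le0').
  move=> hw; exists (fun i => fD (mkseq w i)); split; last exact: fDacc.
  by split => // i; rewrite mkseqS; apply: fDstep.
have gD : GFG D.
  exists fD; split => //.
  by move=> w /hlang; apply: fDacc.
have := mA D gD hlang; rewrite card_sig => hc.
have : R == setT.
  rewrite eqEcard subsetT /= cardsT; apply: leq_trans hc _.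
  by apply: subset_leq_card; apply/subsetP => x; rewrite !inE.
by move/eqP => -> a; rewrite inE.
Qed.

End Cons.

Section E.
Context {Sigma : finType}.
Implicit Types A B : tNCW Sigma.

Lemma strat_sfin B (f : seq Sigma -> st B) (fstep : forall u a, f (rcons u a) \in delta (f u) a)
  (s0 : Sigma) z v :
  (forall j, j < size z -> ~~ alpha (f (v ++ take j z)) (nth s0 z j) (f (v ++ take j.+1 z))) ->
  sfin (f v) z.
Proof.
elim: z v => [|a z IH] v h //=.
exists (f (v ++ [:: a])).
  rewrite inE; apply/andP; split; first by rewrite cats1 fstep.
  by have := h 0 isT; rewrite /= !take0 cats0.
apply: IH => j hj; have := h j.+1 hj; by rewrite /= -!catA.
Qed.

Lemma exists_le A B (rA : forall q, reachable A q) (nA : normal A) (sdA : sem_det A)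
  (sfA : safe_det A) (sdB : sem_det B) (gB : GFG B) (eqL : forall w, lang A w <-> lang B w)
  (p : st A) : exists q : st B, le p q.
Proof.
case: (reach_frun (rA p)) => u hu.
apply: NNPP => hn.
case: gB => f [f0 fstep facc].
have hf := strat_frun fstep.
have langv : forall v, frun (q0 A) v p -> forall w, langq A p w <-> langq B (f v) w.
  move=> v hv w; split => h.
    apply: (frun_resid sdB (hf v)); rewrite f0; apply/langq0/eqL.
    exact: (frun_lang hv h).
  apply: (frun_resid sdA hv); apply/langq0/eqL/langq0; rewrite -f0.
  exact: (frun_lang (hf v) h).
have hex : forall v, exists z, frun (q0 A) v p -> spath p z p /\ ~ sfin (f v) z.
  move=> v; case: (classic (frun (q0 A) v p)) => hv; last by exists [::].
  have : ~ (forall x, sfin p x -> sfin (f v) x).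
    by move=> h; apply: hn; exists (f v); split => //; apply: langv.
  move=> hnn; have [x hx] := not_all_ex_not _ _ hnn; have [hx1 hx2] := imply_to_and _ _ hx.
  case: (sfin_spath hx1) => p' hp'.
  case: (connect_spath (nA _ _ (spath_connect hp'))) => y hy.
  exists (x ++ y) => _; split; first exact: spath_cat hp' hy.
  by move/sfin_cat.
have [ext hext] : exists ext : seq Sigma -> seq Sigma, forall v, frun (q0 A) v p ->
    spath p (ext v) p /\ ~ sfin (f v) (ext v).
  exists (fun v => proj1_sig (constructive_indefinite_description _ (hex v))).
  move=> v; exact: (proj2_sig (constructive_indefinite_description _ (hex v))).
pose P n := iter n (fun v => v ++ ext v) u.
have PS : forall n, P n.+1 = P n ++ ext (P n) by [].
have Pr : forall n, frun (q0 A) (P n) p.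
  elim=> [|n IH] //; rewrite PS; apply: frun_cat IH (spath_frun (hext _ IH).1).
have extne : forall n, 0 < size (ext (P n)).
  move=> n; case: (hext _ (Pr n)) => _ h; rewrite lt0n size_eq0; apply/eqP => E; apply: h.
  by rewrite E.
have Psz : forall n, n + size u <= size (P n).
  elim=> [|n IH] //; rewrite PS size_cat; have := extne n; lia.
have Ppre : forall n m, n <= m -> exists t, P m = P n ++ t.
  move=> n m /subnK <-; elim: (m - n) => [|k [t IH]]; first by exists [::]; rewrite cats0.
  by exists (t ++ ext (P (k + n))); rewrite addSn PS IH catA.
have [s0 _] : exists s0 : Sigma, True.
  have := extne 0; case: (ext (P 0)) => [|a z] //; by exists a.
pose w i := nth s0 (P i.+1) i.
have wP : forall m i, i < size (P m) -> w i = nth s0 (P m) i.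
  move=> m i hi; rewrite /w.
  case: (leqP m i.+1) => hm.
    by case: (Ppre _ _ hm) => t ->; rewrite nth_cat hi.
  case: (Ppre i.+1 m (ltnW hm)) => t ->; rewrite nth_cat.
  by have := Psz i.+1; case: ltnP => //; lia.
have mk : forall m k, k <= size (P m) -> mkseq w k = take k (P m).
  move=> m k hk; apply: (@eq_from_nth _ s0); first by rewrite size_mkseq size_takel.
  move=> i; rewrite size_mkseq => hi.
  rewrite nth_mkseq // nth_take // (wP m) //; lia.
pose w' j := w (size u + j).
pose sr := fix sr i := if i is i'.+1 then odflt (sr i') [pick s in delta_na A (sr i') (w' i')] else p.
have seg : forall z s s' k, spath s z s' ->
    (forall j, j < size z -> w' (k + j) = nth s0 z j) -> sr k = s ->
    sr (k + size z) = s' /\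
    (forall j, j < size z -> sr (k + j).+1 \in delta_na A (sr (k + j)) (w' (k + j))).
  elim=> [|a z IH] s s' k /=.
    by move=> -> _ <-; rewrite addn0.
  case=> s1 hs1 hp hw hk.
  have e1 : sr k.+1 = s1.
    rewrite /=; have := hw 0 isT; rewrite addn0 /= => ->; rewrite hk.
    case: pickP => [s'' h|/(_ s1)]; last by rewrite hs1.
    by rewrite (sd_uniq sfA h hs1).
  have := IH s1 s' k.+1 hp _ e1; case.
    move=> j hj; have := hw j.+1 hj; by rewrite addnS -addSn.
  move=> h1 h2; split; first by rewrite addnS -addSn.
  case=> [|j] hj.
    rewrite addn0; suff : sr k.+1 \in delta_na A (sr k) (w' k) by [].
    by rewrite e1 hk; have := hw 0 isT; rewrite addn0 /= => ->.
  by rewrite -addSnnS; apply: h2.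
have segs : forall n, sr (size (P n) - size u) = p /\
    forall i, i < size (P n) - size u -> sr i.+1 \in delta_na A (sr i) (w' i).
  elim=> [|n [IH1 IH2]]; first by rewrite subnn.
  have hPu := Psz n.
  have hw : forall j, j < size (ext (P n)) ->
      w' ((size (P n) - size u) + j) = nth s0 (ext (P n)) j.
    move=> j hj; rewrite /w' addnA subnKC; last by lia.
    rewrite (wP n.+1); last by rewrite PS size_cat; lia.
    by rewrite PS nth_cat ltnNge leq_addr /= addKn.
  have [h1 h2] := seg _ _ _ _ (hext _ (Pr n)).1 hw IH1.
  have eS : size (P n.+1) - size u = size (P n) - size u + size (ext (P n)).
    rewrite PS size_cat; lia.
  rewrite eS; split => // i hi.
  case: (ltnP i (size (P n) - size u)) => hik; first exact: IH2.
  have := h2 (i - (size (P n) - size u)); rewrite subnKC //; apply; lia.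
have hwA : langq A p w'.
  exists sr; split; first split => //.
    move=> i; apply: na_delta ((segs i.+1).2 i _); have := Psz i.+1; lia.
  exists 0 => i _; apply: na_alpha ((segs i.+1).2 i _); have := Psz i.+1; lia.
have hwL : lang A w.
  apply: lang_ext (frun_lang hu hwA) => i; rewrite (wcat_nth _ _ s0).
  case: ltnP => hi; first by rewrite (wP 0).
  by rewrite /w' subnKC.
have [N hN] := facc w (proj1 (eqL w) hwL).
have hPN := Psz N.
apply: (hext _ (Pr N)).2.
apply: (@strat_sfin B f fstep s0) => j hj.
have e1 : forall j, j <= size (ext (P N)) -> mkseq w (size (P N) + j) = P N ++ take j (ext (P N)).
  move=> j' hj'; rewrite (mk N.+1); last by rewrite PS size_cat; lia.
  by rewrite PS take_cat ltnNge leq_addr /= addKn.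
have e2 : w (size (P N) + j) = nth s0 (ext (P N)) j.
  rewrite (wP N.+1); last by rewrite PS size_cat; lia.
  by rewrite PS nth_cat ltnNge leq_addr /= addKn.
have hNj : N <= size (P N) + j by lia.
have := hN _ hNj.
by rewrite -e1 ?(ltnW hj) // -e1 // -e2 addnS.
Qed.

End E.

Section Main.
Context {Sigma : finType}.
Implicit Types A B : tNCW Sigma.

Lemma seqv_sym A (p q : st A) : seqv p q -> seqv q p.
Proof. by case. Qed.

Lemma seqv_trans A (p q r : st A) : seqv p q -> seqv q r -> seqv p r.
Proof. by case=> h1 h2 [h3 h4]; split; [apply: le_trans h1 h3 | apply: le_trans h4 h2]. Qed.

Lemma seqv_eq A (sdA : sem_det A) (sfA : safe_det A) (gA : GFG A) (mA : minimal_GFG A)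
  (p q : st A) : seqv p q -> p = q.
Proof.
pose rep (a : st A) := odflt a [pick b | pb (seqv b a)].
have repP : forall a, seqv (rep a) a.
  move=> a; rewrite /rep; case: pickP => [b /pbP //|/(_ a)].
  by have -> : pb (seqv a a) by apply/pbP; split; apply: le_refl.
have repE : forall a b, seqv a b -> rep a = rep b.
  move=> a b hab; rewrite /rep (@eq_pick _ _ (fun c => pb (seqv c b))) //.
    have := repP a; rewrite /rep; case: pickP => [c _|/(_ a)] //.
      by case: pickP => [c' _|/(_ a)] //; rewrite /=; move=> /negP; case; apply/pbP;
         split; case: hab.
    by move=> /negP; case; apply/pbP; split; apply: le_refl.
  move=> c; apply/pbP/pbP => h; [exact: seqv_trans h hab | exact: seqv_trans h (seqv_sym hab)].
pose R := [set a | rep a == a].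
have inR : forall a, rep a \in R.
  by move=> a; rewrite inE; apply/eqP; apply: repE; apply: repP.
have full := @dom_full _ A sdA sfA gA mA R
  (fun a => ex_intro2 _ _ (rep a) (inR a) (repP a).2)
  (fun r a r' _ _ => ex_intro2 _ _ (rep r') (inR r') (seqv_sym (repP r'))).
move=> hpq.
have := full p; have := full q; rewrite !inE => /eqP <- /eqP <-.
exact: repE.
Qed.

End Main.
Unset Implicit Arguments.

Lemma na0_a (Sigma : finType) (A : tNCW Sigma) (q s : st A) a :
  delta_na A q a = set0 -> s \in delta q a -> s \in delta_a A q a.
Proof.
move=> h hs; rewrite inE hs /=; apply: contraT => hn.
have : s \in delta_na A q a by rewrite inE hs hn.
by rewrite h inE.
Qed.

Lemma a_delta (Sigma : finType) (A : tNCW Sigma) (q s : st A) a :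
  s \in delta_a A q a -> s \in delta q a.
Proof. by rewrite inE => /andP[]. Qed.

Lemma hom_na0 (Sigma : finType) (A : tNCW Sigma) (q s : st A) a :
  alpha_homogenous A -> s \in delta_a A q a -> delta_na A q a = set0.
Proof. by move=> hom hs; case: (hom q a) => // h; rewrite h inE in hs. Qed.

Lemma gfg0 (Sigma : finType) (A : tNCW Sigma) : GFG_state A (q0 A) -> GFG A.
Proof. by case=> f hf; exists f. Qed.

Arguments na0_a {Sigma A q s a}.
Arguments a_delta {Sigma A q s a}.
Arguments hom_na0 {Sigma A q s a}.
Arguments gfg0 {Sigma A}.

Theorem mainTheorem4 (Sigma : finType) (C1 C2 : tNCW Sigma) :
  nice C1 -> nice C2 ->
  (forall w, lang C1 w <-> lang C2 w) ->
  minimal_GFG C1 -> minimal_GFG C2 ->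
  alpha_max_up_to_hom C1 -> alpha_max_up_to_hom C2 ->
  isomorphic C1 C2.
Proof.
case=> rA gsA nA sfA sdA [rB gsB nB sfB sdB] eqL mA mB [homA amA] [homB amB].
have gA := gfg0 (gsA (q0 C1)).
have gB := gfg0 (gsB (q0 C2)).
have eqL' : forall w, lang C2 w <-> lang C1 w by move=> w; split => /eqL.
have cAB : #|st C1| <= #|st C2| by apply: mA gB eqL'.
have cBA : #|st C2| <= #|st C1| by apply: mB gA eqL.
have E12 := exists_le rA nA sdA sfA sdB gB eqL.
have E21 := exists_le rB nB sdB sfB sdA gA eqL'.
have RA := seqv_eq sdA sfA gA mA.
have RB := seqv_eq sdB sfB gB mB.
pose Q := [set p : st C1 | pb (exists q : st C2, le p q /\ le q p)].
have Qfull : forall p, p \in Q.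
  apply: (@dom_full _ C1 sdA sfA gA mA Q).
    move=> a.
    pose up (r : st C1) := #|[set t : st C1 | pb (le r t)]|.
    have Pa : pb (le a a) by apply/pbP; apply: le_refl.
    case: (@arg_minnP _ a (fun r => pb (le a r)) up Pa) => r /pbP har hmin.
    exists r => //.
    case: (E12 r) => q hrq; case: (E21 q) => t hqt.
    have hrt := le_trans hrq hqt.
    have htr : le t r.
      apply: NNPP => hn.
      have : up t < up r.
        apply: proper_card; apply/properP; split.
          apply/subsetP => x; rewrite !inE => /pbP h; apply/pbP; exact: le_trans hrt h.
        exists r; rewrite !inE; first by apply/pbP; apply: le_refl.
        by apply/pbP.
      have : up r <= up t by apply: hmin; apply/pbP; apply: le_trans har hrt.
      by move=> h1 h2; have := leq_ltn_trans h1 h2; rewrite ltnn.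
    rewrite inE; apply/pbP; exists q; split => //; exact: le_trans hqt htr.
  move=> r a r' hr hr'.
  exists r'; last by split; apply: le_refl.
  move: hr; rewrite !inE => /pbP [q [hrq hqr]]; apply/pbP.
  case: (le_step sdA sdB sfB hrq hr') => q' hq' hl1.
  case: (le_step sdB sdA sfA hqr hq') => r'' hr'' hl2.
  rewrite (sd_uniq sfA hr'' hr') in hl2.
  by exists q'.
pose kappa (p : st C1) : st C2 := odflt (q0 C2) [pick q | pb (le p q /\ le q p)].
have kP : forall p, le p (kappa p) /\ le (kappa p) p.
  move=> p; rewrite /kappa; case: pickP => [q /pbP //|].
  have := Qfull p; rewrite inE => /pbP [q hq] /(_ q).
  by have -> : pb (le p q /\ le q p) by apply/pbP.
have kinj : injective kappa.
  move=> p1 p2 e; apply: RA; split.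
    by apply: le_trans (kP p1).1 _; rewrite e; exact: (kP p2).2.
  by apply: le_trans (kP p2).1 _; rewrite -e; exact: (kP p1).2.
have kbij : bijective kappa by apply: inj_card_bij.
have fwd : forall p p' a, p' \in delta_na C1 p a -> kappa p' \in delta_na C2 (kappa p) a.
  move=> p p' a hp'.
  case: (le_step sdA sdB sfB (kP p).1 hp') => q' hq' hl1.
  case: (le_step sdB sdA sfA (kP p).2 hq') => p'' hp'' hl2.
  rewrite (sd_uniq sfA hp'' hp') in hl2.
  have -> : kappa p' = q' by apply: RB; split;
    [apply: le_trans (kP p').2 hl1 | apply: le_trans hl2 (kP p').1].
  exact: hq'.
have bwd : forall p p' a, kappa p' \in delta_na C2 (kappa p) a -> p' \in delta_na C1 p a.
  move=> p p' a hq.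
  case: (le_step sdB sdA sfA (kP p).2 hq) => p'' hp'' _.
  have := fwd _ _ _ hp''; move/(sd_uniq sfB hq)/kinj => ->; exact: hp''.
case: (kbij) => g gK Kg.
exists kappa; split => // [p p' a|p p' a]; first by split; [apply: fwd | apply: bwd].
split => hs.
- have h0 := hom_na0 homA hs.
  have h1 : delta_na C2 (kappa p) a = set0.
    apply/eqP; rewrite -subset0; apply/subsetP => q hq.
    have : g q \in delta_na C1 p a by apply: bwd; rewrite Kg.
    by rewrite h0 inE.
  apply: (na0_a h1); apply: (amB _ _ h1).
  case/set0Pn: (@delta_ne _ C2 (kappa p) a) => s' hs'; exists s'; split => // w.
  change (langq C2 (kappa p') w <-> langq C2 s' w).
  rewrite -((kP p').1.1 w) (resid sdA _ _ _ (a_delta hs)) ((kP p).1.1 _).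
  by rewrite -(resid sdB _ _ _ hs').
- have h0 := hom_na0 homB hs.
  have h1 : delta_na C1 p a = set0.
    apply/eqP; rewrite -subset0; apply/subsetP => q hq.
    by have := fwd _ _ _ hq; rewrite h0 inE.
  apply: (na0_a h1); apply: (amA _ _ h1).
  case/set0Pn: (@delta_ne _ C1 p a) => s' hs'; exists s'; split => // w.
  change (langq C1 p' w <-> langq C1 s' w).
  rewrite ((kP p').1.1 w) (resid sdB _ _ _ (a_delta hs)) -((kP p).1.1 _).
  by rewrite -(resid sdA _ _ _ hs').
Qed.
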